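(* Let $r$ and $s$ be typical subranks of tensors in $\mathbb{R}^{n_1} \otimes \mathbb{R}^{n_2} \otimes \mathbb{R}^{n_3}$ with $r \leq s$. Then every integer $l$ with $r \leq l \leq s$ is also a typical subrank of tensors in $\mathbb{R}^{n_1} \otimes \mathbb{R}^{n_2} \otimes \mathbb{R}^{n_3}$.
   Context: For $r \geq 0$ let $I_r := \sum_{j=1}^r e_j \otimes e_j \otimes e_j \in (\mathbb{R}^r)^{\otimes 3}$. The subrank of $T \in \mathbb{R}^{n_1} \otimes \mathbb{R}^{n_2} \otimes \mathbb{R}^{n_3}$ is $Q(T) := \max\{ r \mid \exists\ \mathbb{R}\text{-linear } \varphi_i : \mathbb{R}^{n_i} \to \mathbb{R}^r,\ (\varphi_1 \otimes \varphi_2 \otimes \varphi_3) T = I_r\}$. An integer $r$ is a typical subrank (of the format $n_1\times n_2\times n_3$) if the set $\{T \in \mathbb{R}^{n_1} \otimes \mathbb{R}^{n_2} \otimes \mathbb{R}^{n_3} \mid Q(T) = r\}$ contains a nonempty open subset in the Euclidean topology. *)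

(* Defs.v *)
From HB Require Import structures.
From mathcomp Require Import all_boot all_order all_algebra.
From mathcomp Require Import reals.
Set Implicit Arguments. Unset Strict Implicit. Unset Printing Implicit Defensive.
Import Order.TTheory GRing.Theory Num.Theory.
Local Open Scope ring_scope.

Definition tensor (R : realType) (n1 n2 n3 : nat) := 'I_n1 -> 'I_n2 -> 'I_n3 -> R.

Definition tensor_map (R : realType) (n1 n2 n3 m1 m2 m3 : nat)
  (A1 : 'M[R]_(m1, n1)) (A2 : 'M[R]_(m2, n2)) (A3 : 'M[R]_(m3, n3))
  (T : tensor R n1 n2 n3) : tensor R m1 m2 m3 :=
  fun a b c => \sum_(i < n1) \sum_(j < n2) \sum_(k < n3)
                 A1 a i * A2 b j * A3 c k * T i j k.

Definition unit_tensor (R : realType) (r : nat) : tensor R r r r :=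
  fun a b c => if (a == b) && (b == c) then 1 else 0.

Definition restricts_to_unit (R : realType) (n1 n2 n3 : nat)
  (T : tensor R n1 n2 n3) (r : nat) : Prop :=
  exists (A1 : 'M[R]_(r, n1)) (A2 : 'M[R]_(r, n2)) (A3 : 'M[R]_(r, n3)),
    forall a b c, tensor_map A1 A2 A3 T a b c = @unit_tensor R r a b c.

Definition subrank_is (R : realType) (n1 n2 n3 : nat)
  (T : tensor R n1 n2 n3) (r : nat) : Prop :=
  restricts_to_unit T r /\ (forall r', restricts_to_unit T r' -> (r' <= r)%N).

Definition tensor_dist2 (R : realType) (n1 n2 n3 : nat)
  (T S : tensor R n1 n2 n3) : R :=
  \sum_(i < n1) \sum_(j < n2) \sum_(k < n3) (T i j k - S i j k) ^+ 2.

(* r is a typical subrank of format n1 x n2 x n3: {T | Q(T) = r} contains a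
   nonempty Euclidean-open set, i.e. (equivalently, since open balls form a
   basis of the Euclidean topology) contains an open Euclidean ball. *)
Definition typical_subrank (R : realType) (n1 n2 n3 r : nat) : Prop :=
  exists (T0 : tensor R n1 n2 n3) (eps : R), 0 < eps /\
    forall T : tensor R n1 n2 n3, tensor_dist2 T T0 < eps ^+ 2 -> subrank_is T r.

(* Main.v *)
Require Import Defs.
From mathcomp Require Import all_boot all_order all_algebra.
From mathcomp Require Import reals.
From HB Require Import structures.
From mathcomp Require Import all_boot all_order all_algebra.
From mathcomp Require Import reals.
From mathcomp Require Import ordered_qelim qe_rcf.
From mathcomp Require Import ring lra.
From Stdlib Require Import Classical.
From mathcomp Require Import zify.
Set Implicit Arguments. Unset Strict Implicit. Unset Printing Implicit Defensive.
Import Order.TTheory GRing.Theory Num.Theory.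
Local Open Scope ring_scope.

Definition near (R : realType) n1 n2 n3 (Y' Y : tensor R n1 n2 n3) (d : R) :=
  forall i j k, `|Y' i j k - Y i j k| < d.

Definition isopen (R : realType) n1 n2 n3 (U : tensor R n1 n2 n3 -> Prop) :=
  forall Y, U Y -> exists2 d, 0 < d & forall Y', near Y' Y d -> U Y'.

Definition cont (R : realType) n1 n2 n3 (f : tensor R n1 n2 n3 -> R) :=
  forall Y e, 0 < e -> exists2 d, 0 < d & forall Y', near Y' Y d -> `|f Y' - f Y| < e.

Definition DPb (R : realType) n1 n2 n3 (P : tensor R n1 n2 n3 -> bool) :=
  forall U, isopen U -> (exists Y, U Y) -> exists W, [/\ isopen W, (exists Y, W Y),
    (forall Y, W Y -> U Y) & exists b, forall Y, W Y -> P Y = b].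

Lemma near_le (R : realType) n1 n2 n3 (Y' Y : tensor R n1 n2 n3) d d' :
  near Y' Y d -> d <= d' -> near Y' Y d'.
Proof. by move=> h le i j k; apply: lt_le_trans (h i j k) le. Qed.

Lemma isopenI (R : realType) n1 n2 n3 (U V : tensor R n1 n2 n3 -> Prop) :
  isopen U -> isopen V -> isopen (fun Y => U Y /\ V Y).
Proof.
move=> hU hV Y [/hU [d1 d1p h1] /hV [d2 d2p h2]].
exists (Num.min d1 d2); first by rewrite lt_min d1p d2p.
move=> Y' hn; split; [apply: h1|apply: h2]; apply: near_le hn _;
  by rewrite ge_min lexx ?orbT.
Qed.

Lemma DPb_open (R : realType) n1 n2 n3 (P : tensor R n1 n2 n3 -> bool) :
  isopen (fun Y => P Y) -> DPb P.
Proof.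
move=> hP U hU [Y0 UY0].
case: (classic (exists Y, U Y /\ P Y)) => [[Y1 [UY1 PY1]]|hn].
  exists (fun Y => U Y /\ P Y); split.
  - exact: isopenI.
  - by exists Y1.
  - by move=> Y [].
  by exists true => Y [].
exists U; split => //; first by exists Y0.
exists false => Y UY; apply/negbTE/negP => PY; apply: hn; by exists Y.
Qed.

Lemma DPb_op2 (R : realType) n1 n2 n3 (P Q : tensor R n1 n2 n3 -> bool)
  (g : bool -> bool -> bool) : DPb P -> DPb Q -> DPb (fun Y => g (P Y) (Q Y)).
Proof.
move=> hP hQ U hU neU.
have [W1 [oW1 neW1 sW1 [b1 hb1]]] := hP U hU neU.
have [W2 [oW2 neW2 sW2 [b2 hb2]]] := hQ W1 oW1 neW1.
exists W2; split => //; first by move=> Y /sW2 /sW1.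
by exists (g b1 b2) => Y WY; rewrite hb2 // hb1 //; apply: sW2.
Qed.

Lemma DPb_neg (R : realType) n1 n2 n3 (P : tensor R n1 n2 n3 -> bool) :
  DPb P -> DPb (fun Y => ~~ P Y).
Proof.
move=> hP U hU neU.
have [W1 [oW1 neW1 sW1 [b1 hb1]]] := hP U hU neU.
by exists W1; split => //; exists (~~ b1) => Y WY; rewrite hb1.
Qed.

Lemma DPb_const (R : realType) n1 n2 n3 (b : bool) :
  DPb (fun Y : tensor R n1 n2 n3 => b).
Proof. by move=> U hU neU; exists U; split => //; exists b. Qed.

Lemma DPb_ext (R : realType) n1 n2 n3 (P Q : tensor R n1 n2 n3 -> bool) :
  (forall Y, P Y = Q Y) -> DPb P -> DPb Q.
Proof.
move=> e hP U hU neU; have [W [h1 h2 h3 [b hb]]] := hP U hU neU.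
by exists W; split => //; exists b => Y WY; rewrite -e hb.
Qed.

Lemma minle_l (R : realType) (x y : R) : Num.min x y <= x.
Proof. by rewrite ge_min lexx. Qed.
Lemma minle_r (R : realType) (x y : R) : Num.min x y <= y.
Proof. by rewrite ge_min lexx orbT. Qed.

Lemma cont_const (R : realType) n1 n2 n3 (c : R) : cont (fun _ : tensor R n1 n2 n3 => c).
Proof. by move=> Y e ep; exists 1 => // Y' _; rewrite subrr normr0. Qed.

Lemma cont_coord (R : realType) n1 n2 n3 (S : tensor R n1 n2 n3) i j k :
  cont (fun Y : tensor R n1 n2 n3 => Y i j k + S i j k).
Proof.
move=> Y e ep; exists e => // Y' h.
by rewrite opprD addrACA subrr addr0; apply: h.
Qed.

Lemma cont_add (R : realType) n1 n2 n3 (f g : tensor R n1 n2 n3 -> R) :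
  cont f -> cont g -> cont (fun Y => f Y + g Y).
Proof.
move=> hf hg Y e ep.
have e2p : 0 < e / 2 by rewrite divr_gt0.
have [d1 d1p h1] := hf Y _ e2p; have [d2 d2p h2] := hg Y _ e2p.
exists (Num.min d1 d2); first by rewrite lt_min d1p d2p.
move=> Y' hn.
have a1 := h1 Y' (near_le hn (minle_l _ _)).
have a2 := h2 Y' (near_le hn (minle_r _ _)).
rewrite opprD addrACA; apply: le_lt_trans (ler_normD _ _) _.
lra.
Qed.

Lemma cont_opp (R : realType) n1 n2 n3 (f : tensor R n1 n2 n3 -> R) :
  cont f -> cont (fun Y => - f Y).
Proof.
move=> hf Y e ep; have [d dp h] := hf Y e ep; exists d => // Y' hn.
by rewrite -opprD normrN; apply: h.
Qed.

Lemma cont_mul (R : realType) n1 n2 n3 (f g : tensor R n1 n2 n3 -> R) :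
  cont f -> cont g -> cont (fun Y => f Y * g Y).
Proof.
move=> hf hg Y e ep.
set a := f Y; set b := g Y.
have Bp : 0 < 2 * (`|b| + 1) by rewrite mulr_gt0 // ltr_wpDl.
have Ap : 0 < 2 * (`|a| + 2) by rewrite mulr_gt0 // ltr_wpDl.
set e1 := Num.min 1 (e / (2 * (`|b| + 1))).
set e2 := e / (2 * (`|a| + 2)).
have e1p : 0 < e1 by rewrite lt_min ltr01 divr_gt0.
have e2p : 0 < e2 by rewrite divr_gt0.
have e11 : e1 <= 1 by rewrite ge_min lexx.
have e1b : e1 * (2 * (`|b| + 1)) <= e.
  by rewrite -ler_pdivlMr // ge_min lexx orbT.
have e2a : e2 * (2 * (`|a| + 2)) = e by rewrite /e2 mulfVK // gt_eqF.
have [d1 d1p h1] := hf Y _ e1p; have [d2 d2p h2] := hg Y _ e2p.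
exists (Num.min d1 d2); first by rewrite lt_min d1p d2p.
move=> Y' hn.
have u1 := h1 Y' (near_le hn (minle_l _ _)).
have v1 := h2 Y' (near_le hn (minle_r _ _)).
have -> : f Y' * g Y' - a * b = (f Y' - a) * b + f Y' * (g Y' - b) by ring.
apply: le_lt_trans (ler_normD _ _) _; rewrite !normrM.
have F1 : `|f Y'| <= `|a| + `|f Y' - a|.
  by have := ler_normD a (f Y' - a); rewrite [a + _]addrC subrK.
have m1 := normr_ge0 (f Y' - a); have m2 := normr_ge0 (g Y' - b).
have m3 := normr_ge0 b; have m4 := normr_ge0 a; have m5 := normr_ge0 (f Y').
nra.
Qed.

Lemma cont_ext (R : realType) n1 n2 n3 (f g : tensor R n1 n2 n3 -> R) :
  (forall Y, f Y = g Y) -> cont f -> cont g.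
Proof.
move=> e hf Y ep e0; have [d dp h] := hf Y ep e0; exists d => // Y' hn.
by rewrite -!e; apply: h.
Qed.

Lemma cont_natmul (R : realType) n1 n2 n3 (f : tensor R n1 n2 n3 -> R) m :
  cont f -> cont (fun Y => f Y *+ m).
Proof.
move=> hf; apply: cont_ext (cont_mul hf (cont_const m%:R)) => Y.
by rewrite mulr_natr.
Qed.

Lemma cont_exp (R : realType) n1 n2 n3 (f : tensor R n1 n2 n3 -> R) m :
  cont f -> cont (fun Y => f Y ^+ m).
Proof.
move=> hf; elim: m => [|m IH].
  by apply: cont_ext (cont_const 1) => Y; rewrite expr0.
by apply: cont_ext (cont_mul hf IH) => Y; rewrite exprS.
Qed.

Definition ev (R : realType) n1 n2 n3 (S Y : tensor R n1 n2 n3) : seq R :=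
  [seq Y x.1.1 x.1.2 x.2 + S x.1.1 x.1.2 x.2 | x <- enum {: 'I_n1 * 'I_n2 * 'I_n3}].

Lemma cont_nth (R : realType) n1 n2 n3 (S : tensor R n1 n2 n3)
   (s : seq ('I_n1 * 'I_n2 * 'I_n3)) m :
  cont (fun Y => nth 0 [seq Y x.1.1 x.1.2 x.2 + S x.1.1 x.1.2 x.2 | x <- s] m).
Proof.
elim: s m => [|x s IH] m /=.
  by apply: cont_ext (cont_const 0) => Y; rewrite nth_nil.
case: m => [|m] /=; first exact: cont_coord.
exact: IH.
Qed.

Lemma cont_eval (R : realType) n1 n2 n3 (S : tensor R n1 n2 n3) (t : GRing.term R) :
  GRing.rterm t -> cont (fun Y => GRing.eval (ev S Y) t).
Proof.
elim: t => //=.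
- move=> m _; exact: cont_nth.
- move=> c _; exact: cont_const.
- move=> m _; exact: cont_const.
- by move=> t1 IH1 t2 IH2 /andP[/IH1 h1 /IH2 h2]; apply: cont_add.
- by move=> t1 IH1 /IH1 h1; apply: cont_opp.
- by move=> t1 IH1 m /IH1 h1; apply: cont_natmul.
- by move=> t1 IH1 t2 IH2 /andP[/IH1 h1 /IH2 h2]; apply: cont_mul.
- by move=> t1 IH1 m /IH1 h1; apply: cont_exp.
Qed.

Lemma open_lt (R : realType) n1 n2 n3 (f g : tensor R n1 n2 n3 -> R) :
  cont f -> cont g -> isopen (fun Y => f Y < g Y).
Proof.
move=> hf hg Y lt.
have hc := cont_add hg (cont_opp hf).
have ep : 0 < g Y - f Y by rewrite subr_gt0.
have [d dp h] := hc Y _ ep; exists d => // Y' /h.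
rewrite ltr_norml => /andP[h1 h2]; rewrite -subr_gt0; lra.
Qed.

Lemma open_neq (R : realType) n1 n2 n3 (f g : tensor R n1 n2 n3 -> R) :
  cont f -> cont g -> isopen (fun Y => f Y != g Y).
Proof.
move=> hf hg Y; rewrite neq_lt => /orP[lt|lt].
  have [d dp h] := open_lt hf hg lt; exists d => // Y' /h.
  by rewrite neq_lt => ->.
have [d dp h] := open_lt hg hf lt; exists d => // Y' /h.
by rewrite neq_lt => ->; rewrite orbT.
Qed.

Lemma DPb_qf (R : realType) n1 n2 n3 (S : tensor R n1 n2 n3) (psi : ord.formula R) :
  ord.qf_form psi -> ord.rformula psi -> DPb (fun Y => ord.qf_eval (ev S Y) psi).
Proof.
elim: psi => //=.
- by move=> b _ _; apply: DPb_const.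
- move=> t1 t2 _ /andP[r1 r2].
  apply: DPb_ext (DPb_neg (DPb_open (open_neq (cont_eval S r1) (cont_eval S r2)))).
  by move=> Y; rewrite negbK.
- move=> t1 t2 _ /andP[r1 r2].
  exact: (DPb_open (open_lt (cont_eval S r1) (cont_eval S r2))).
- move=> t1 t2 _ /andP[r1 r2].
  apply: DPb_ext (DPb_neg (DPb_open (open_lt (cont_eval S r2) (cont_eval S r1)))).
  by move=> Y; rewrite -leNgt.
- move=> f1 IH1 f2 IH2 /andP[q1 q2] /andP[r1 r2].
  exact: (DPb_op2 andb (IH1 q1 r1) (IH2 q2 r2)).
- move=> f1 IH1 f2 IH2 /andP[q1 q2] /andP[r1 r2].
  exact: (DPb_op2 orb (IH1 q1 r1) (IH2 q2 r2)).
- move=> f1 IH1 f2 IH2 /andP[q1 q2] /andP[r1 r2].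
  exact: (DPb_op2 implb (IH1 q1 r1) (IH2 q2 r2)).
- by move=> f1 IH1 q1 r1; apply: DPb_neg; apply: IH1.
Qed.

Lemma tm_pair (R : realType) n1 n2 n3 m1 m2 m3 (A1 : 'M[R]_(m1, n1)) (A2 : 'M[R]_(m2, n2))
  (A3 : 'M[R]_(m3, n3)) (T : tensor R n1 n2 n3) a b c :
  tensor_map A1 A2 A3 T a b c =
  \sum_(x : 'I_n1 * 'I_n2 * 'I_n3) A1 a x.1.1 * A2 b x.1.2 * A3 c x.2 * T x.1.1 x.1.2 x.2.
Proof.
rewrite /tensor_map pair_bigA /=.
by rewrite (pair_bigA _ (fun p k => A1 a p.1 * A2 b p.2 * A3 c k * T p.1 p.2 k)).
Qed.

Lemma restr0 (R : realType) n1 n2 n3 (T : tensor R n1 n2 n3) : restricts_to_unit T 0.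
Proof. by exists 0, 0, 0 => [[]]. Qed.

Lemma restr_ext (R : realType) n1 n2 n3 (T T' : tensor R n1 n2 n3) m :
  (forall i j k, T i j k = T' i j k) -> restricts_to_unit T m -> restricts_to_unit T' m.
Proof.
move=> e [A1 [A2 [A3 h]]]; exists A1, A2, A3 => a b c; rewrite -h !tm_pair.
by apply: eq_bigr => x _; rewrite e.
Qed.

Lemma restr_down (R : realType) n1 n2 n3 (T : tensor R n1 n2 n3) m :
  restricts_to_unit T m.+1 -> restricts_to_unit T m.
Proof.
case=> [A1 [A2 [A3 h]]].
exists (\matrix_(a, i) A1 (widen_ord (leqnSn m) a) i).
exists (\matrix_(a, i) A2 (widen_ord (leqnSn m) a) i).
exists (\matrix_(a, i) A3 (widen_ord (leqnSn m) a) i).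
move=> a b c.
have -> : unit_tensor R a b c = unit_tensor R (widen_ord (leqnSn m) a)
   (widen_ord (leqnSn m) b) (widen_ord (leqnSn m) c) by [].
rewrite -h !tm_pair; apply: eq_bigr => x _; by rewrite !mxE.
Qed.

Lemma restr_le (R : realType) n1 n2 n3 (T : tensor R n1 n2 n3) m m' :
  (m' <= m)%N -> restricts_to_unit T m -> restricts_to_unit T m'.
Proof.
elim: m => [|m IH]; first by rewrite leqn0 => /eqP ->.
rewrite leq_eqVlt => /orP[/eqP -> //|]; rewrite ltnS => le h.
exact: IH le (restr_down h).
Qed.

Lemma sum_delta (R : realType) (I : finType) (i0 : I) (F : I -> R) :
  \sum_i F i * (i == i0)%:R = F i0.
Proof.
rewrite (bigD1 i0) //= eqxx mulr1 big1 ?addr0 // => i /negbTE ->.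
by rewrite mulr0.
Qed.

Lemma tm_change (R : realType) n1 n2 n3 m (T T' : tensor R n1 n2 n3) i0 j0 k0
  (A1 : 'M[R]_(m, n1)) (A2 : 'M[R]_(m, n2)) (A3 : 'M[R]_(m, n3)) :
  (forall i j k, (i != i0) || (j != j0) || (k != k0) -> T i j k = T' i j k) ->
  forall a b c, tensor_map A1 A2 A3 T a b c = tensor_map A1 A2 A3 T' a b c +
     (T i0 j0 k0 - T' i0 j0 k0) * (A1 a i0 * A2 b j0 * A3 c k0).
Proof.
move=> hT a b c; rewrite !tm_pair.
have e (x : 'I_n1 * 'I_n2 * 'I_n3) : T x.1.1 x.1.2 x.2 =
   T' x.1.1 x.1.2 x.2 + (T i0 j0 k0 - T' i0 j0 k0) * (x == (i0, j0, k0))%:R.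
  case: (eqVneq x (i0, j0, k0)) => [->|ne] /=; first by rewrite mulr1; ring.
  rewrite mulr0 addr0; apply: hT.
  move: ne; case: x => [[i j] k] /=.
  by apply: contraNT; rewrite !negb_or !negbK => /andP[/andP[/eqP -> /eqP ->] /eqP ->].
rewrite (eq_bigr (fun x => A1 a x.1.1 * A2 b x.1.2 * A3 c x.2 * T' x.1.1 x.1.2 x.2 +
   (T i0 j0 k0 - T' i0 j0 k0) * (A1 a x.1.1 * A2 b x.1.2 * A3 c x.2) * (x == (i0, j0, k0))%:R)).
  by rewrite big_split /= sum_delta.
by move=> x _; rewrite e; ring.
Qed.

Lemma restr_change (R : realType) n1 n2 n3 (T T' : tensor R n1 n2 n3) i0 j0 k0 m :
  (forall i j k, (i != i0) || (j != j0) || (k != k0) -> T i j k = T' i j k) ->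
  restricts_to_unit T' m.+1 -> restricts_to_unit T m.
Proof.
move=> hT [A1 [A2 [A3 h]]].
have [p hp] : exists p : 'I_m.+1, forall a, A1 a i0 != 0 -> A1 p i0 != 0.
  case: (pickP (fun p => A1 p i0 != 0)) => [p hp|hn]; first by exists p.
  by exists ord0 => a; rewrite hn.
pose lam (a : 'I_m) := A1 (lift p a) i0 / A1 p i0.
have hl a : A1 (lift p a) i0 = A1 p i0 * lam a.
  case: (eqVneq (A1 p i0) 0) => [z|nz].
    rewrite z mul0r; case: (eqVneq (A1 (lift p a) i0) 0) => [-> //|/hp].
    by rewrite z eqxx.
  by rewrite /lam mulrC divfK.
exists (\matrix_(a, i) (A1 (lift p a) i - A1 p i * lam a)).
exists (\matrix_(a, i) A2 (lift p a) i).
exists (\matrix_(a, i) A3 (lift p a) i).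
move=> a b c.
have E : tensor_map (\matrix_(a, i) (A1 (lift p a) i - A1 p i * lam a))
   (\matrix_(a, i) A2 (lift p a) i) (\matrix_(a, i) A3 (lift p a) i) T a b c =
   tensor_map A1 A2 A3 T (lift p a) (lift p b) (lift p c) -
   lam a * tensor_map A1 A2 A3 T p (lift p b) (lift p c).
  rewrite !tm_pair mulr_sumr -sumrB; apply: eq_bigr => x _; rewrite !mxE; ring.
rewrite E !(tm_change _ _ _ hT) !h hl.
have -> : unit_tensor R p (lift p b) (lift p c) = 0.
  by rewrite /unit_tensor (negbTE (neq_lift p b)).
have -> : unit_tensor R (lift p a) (lift p b) (lift p c) = unit_tensor R a b c.
  by rewrite /unit_tensor !(inj_eq (@lift_inj _ p)).
ring.
Qed.

Lemma set_nth_size (R : realType) (e : seq R) x : set_nth 0 e (size e) x = rcons e x.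
Proof. by elim: e => //= y e ->. Qed.

Lemma holds_iota (R : realType) (f : ord.formula R) m n0 e : size e = n0 ->
  (ord.holds e (foldr (fun n g => ord.Exists n g) f (iota n0 m)) <->
   exists s, size s = m /\ ord.holds (e ++ s) f).
Proof.
elim: m n0 e => [|m IH] n0 e se /=.
  split; first by move=> h; exists [::]; rewrite cats0.
  by case=> s [/size0nil -> ]; rewrite cats0.
subst n0.
split.
  case=> x H; rewrite set_nth_size in H.
  have hx : size (rcons e x) = (size e).+1 by rewrite size_rcons.
  have [s [ss hs]] := proj1 (IH _ _ hx) H.
  exists (x :: s); split; first by rewrite /= ss.
  by rewrite -cat_rcons.
case=> [[|x s]] [] //= [ss] hs; exists x; rewrite set_nth_size.
have hx : size (rcons e x) = (size e).+1 by rewrite size_rcons.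
apply: (proj2 (IH _ _ hx)).
by exists s; split => //; rewrite cat_rcons.
Qed.


Definition Mv n1 n2 n3 k := (('I_k * 'I_n1) + ('I_k * 'I_n2) + ('I_k * 'I_n3))%type.

Definition mv1 n1 n2 n3 k (a : 'I_k) (i : 'I_n1) : Mv n1 n2 n3 k := inl (inl (a, i)).
Definition mv2 n1 n2 n3 k (a : 'I_k) (i : 'I_n2) : Mv n1 n2 n3 k := inl (inr (a, i)).
Definition mv3 n1 n2 n3 k (a : 'I_k) (i : 'I_n3) : Mv n1 n2 n3 k := inr (a, i).

Definition sumT (R : realType) n1 n2 n3 k (a b c : 'I_k) : GRing.term R :=
  let N := #|{: 'I_n1 * 'I_n2 * 'I_n3}| in
  let vM (m : Mv n1 n2 n3 k) := GRing.Var R (N + enum_rank m) in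
  foldr (fun x t => GRing.Add
     (GRing.Mul (GRing.Mul (GRing.Mul (vM (mv1 n2 n3 a x.1.1)) (vM (mv2 n1 n3 b x.1.2)))
        (vM (mv3 n1 n2 c x.2))) (GRing.Var R (enum_rank x))) t)
    (GRing.Const 0) (enum {: 'I_n1 * 'I_n2 * 'I_n3}).

Definition body (R : realType) n1 n2 n3 k : ord.formula R :=
  foldr (fun p f => ord.And (ord.Equal (@sumT R n1 n2 n3 k p.1.1 p.1.2 p.2)
                                (GRing.Const (@unit_tensor R k p.1.1 p.1.2 p.2))) f)
    (ord.Bool true) (enum {: 'I_k * 'I_k * 'I_k}).

Definition phi (R : realType) n1 n2 n3 k : ord.formula R :=
  foldr (fun n g => ord.Exists n g) (@body R n1 n2 n3 k)
    (iota #|{: 'I_n1 * 'I_n2 * 'I_n3}| #|{: Mv n1 n2 n3 k}|).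

Lemma rformula_phi (R : realType) n1 n2 n3 k : ord.rformula (@phi R n1 n2 n3 k).
Proof.
rewrite /phi; elim: (iota _ _) => //=.
rewrite /body; elim: (enum _) => //= p s ->; rewrite andbT /=.
by rewrite /sumT; elim: (enum _) => //= x s' ->.
Qed.

Lemma holds_body (R : realType) n1 n2 n3 k e :
  ord.holds e (@body R n1 n2 n3 k) <->
  forall a b c, GRing.eval e (@sumT R n1 n2 n3 k a b c) = @unit_tensor R k a b c.
Proof.
rewrite /body; split.
  move=> h a b c.
  have : (a, b, c) \in enum {: 'I_k * 'I_k * 'I_k} by rewrite mem_enum.
  elim: (enum _) h => //= p s IH [h1 h2]; rewrite in_cons => /orP[/eqP E|].
    by subst p; exact: h1.
  exact: IH.
move=> h; elim: (enum _) => /= [//|p s IH].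
split; [exact: h | exact: IH].
Qed.

Lemma sum_enum (R : realType) (T : finType) (F : T -> R) :
  \sum_(x : T) F x = \sum_(x <- enum T) F x.
Proof. by rewrite big_enum. Qed.

Lemma eval_sumT (R : realType) n1 n2 n3 k (S Y : tensor R n1 n2 n3) s (a b c : 'I_k) :
  GRing.eval (ev S Y ++ s) (@sumT R n1 n2 n3 k a b c) =
  \sum_(x : 'I_n1 * 'I_n2 * 'I_n3)
     nth 0 s (enum_rank (mv1 n2 n3 a x.1.1)) *
     nth 0 s (enum_rank (mv2 n1 n3 b x.1.2)) *
     nth 0 s (enum_rank (mv3 n1 n2 c x.2)) *
     (Y x.1.1 x.1.2 x.2 + S x.1.1 x.1.2 x.2).
Proof.
have sz : size (ev S Y) = #|{: 'I_n1 * 'I_n2 * 'I_n3}| by rewrite size_map -cardE.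
have hM (m : nat) : nth 0 (ev S Y ++ s) (#|{: 'I_n1 * 'I_n2 * 'I_n3}| + m) = nth 0 s m.
  by rewrite nth_cat sz ltnNge leq_addr /= addKn.
have hT (x : 'I_n1 * 'I_n2 * 'I_n3) : nth 0 (ev S Y ++ s) (enum_rank x) =
   Y x.1.1 x.1.2 x.2 + S x.1.1 x.1.2 x.2.
  rewrite nth_cat sz ltn_ord /ev (nth_map x); first by rewrite nth_enum_rank.
  by rewrite -cardE ltn_ord.
rewrite /sumT sum_enum /=.
elim: (enum _) => [|x l IH] /=; first by rewrite big_nil.
by rewrite big_cons IH !hM hT.
Qed.

Definition tadd (R : realType) n1 n2 n3 (Y S : tensor R n1 n2 n3) : tensor R n1 n2 n3 :=
  fun i j k => Y i j k + S i j k.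

Definition mval (R : realType) n1 n2 n3 k (A1 : 'M[R]_(k, n1)) (A2 : 'M[R]_(k, n2))
  (A3 : 'M[R]_(k, n3)) (m : Mv n1 n2 n3 k) : R :=
  match m with
  | inl (inl (a, i)) => A1 a i
  | inl (inr (a, i)) => A2 a i
  | inr (a, i) => A3 a i
  end.

Lemma restr_iff (R : realType) n1 n2 n3 k (S Y : tensor R n1 n2 n3) :
  restricts_to_unit (tadd Y S) k <-> ord.holds (ev S Y) (@phi R n1 n2 n3 k).
Proof.
have sz : size (ev S Y) = #|{: 'I_n1 * 'I_n2 * 'I_n3}| by rewrite size_map -cardE.
rewrite /phi (holds_iota _ _ sz); split.
  case=> [A1 [A2 [A3 h]]].
  pose s := [seq mval A1 A2 A3 m | m <- enum {: Mv n1 n2 n3 k}].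
  have hs m : nth 0 s (enum_rank m) = mval A1 A2 A3 m.
    rewrite /s (nth_map m); first by rewrite nth_enum_rank.
    by rewrite -cardE ltn_ord.
  exists s; split; first by rewrite size_map -cardE.
  apply/holds_body => a b c; rewrite eval_sumT -h tm_pair.
  by apply: eq_bigr => x _; rewrite !hs.
case=> s [_ /holds_body h].
exists (\matrix_(a, i) nth 0 s (enum_rank (mv1 n2 n3 a i))).
exists (\matrix_(a, i) nth 0 s (enum_rank (mv2 n1 n3 a i))).
exists (\matrix_(a, i) nth 0 s (enum_rank (mv3 n1 n2 a i))).
move=> a b c; rewrite -h eval_sumT tm_pair.
by apply: eq_bigr => x _; rewrite !mxE.
Qed.

Lemma qe_exists (R : realType) (f : ord.formula R) : ord.rformula f ->
  exists psi, ord.qf_form psi /\ ord.rformula psi /\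
   forall e, ord.holds e f <-> ord.qf_eval e psi.
Proof.
move=> rf.
have wf := @wf_QE_wproj R.
have ok := @valid_QE_wproj R.
exists (ord.quantifier_elim (@wproj R) f).
have /andP[h1 h2] := ord.quantifier_elim_wf wf rf.
split=> //; split=> // e.
exact: (rwP (ord.quantifier_elim_rformP wf ok e rf)).
Qed.

Lemma DP_restr (R : realType) n1 n2 n3 k (S : tensor R n1 n2 n3) :
  exists P : tensor R n1 n2 n3 -> bool, DPb P /\
    forall Y, restricts_to_unit (tadd Y S) k <-> P Y.
Proof.
have [psi [q [r h]]] := qe_exists (@rformula_phi R n1 n2 n3 k).
exists (fun Y => ord.qf_eval (ev S Y) psi); split; first exact: DPb_qf.
by move=> Y; rewrite restr_iff h.
Qed.

Lemma subrank_uniq (R : realType) n1 n2 n3 (T : tensor R n1 n2 n3) a b :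
  subrank_is T a -> subrank_is T b -> a = b.
Proof.
case=> ha ma [hb mb]; apply/eqP; rewrite eqn_leq.
by rewrite (mb _ ha) (ma _ hb).
Qed.

Lemma subrank_ext (R : realType) n1 n2 n3 (T T' : tensor R n1 n2 n3) q :
  (forall i j k, T i j k = T' i j k) -> subrank_is T q -> subrank_is T' q.
Proof.
move=> e [h m]; split; first exact: restr_ext e h.
move=> r' h'; apply: m; apply: restr_ext h' => i j k; by rewrite e.
Qed.

Lemma Klem (R : realType) n1 n2 n3 (S : tensor R n1 n2 n3) K :
  forall U, isopen U -> (exists Y, U Y) ->
  (forall Y, U Y -> ~ restricts_to_unit (tadd Y S) K) ->
  exists W q, [/\ isopen W, (exists Y, W Y), (forall Y, W Y -> U Y) &
     forall Y, W Y -> subrank_is (tadd Y S) q].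
Proof.
elim: K => [|K IH] U oU [Y0 UY0] hK.
  by case: (hK Y0 UY0); apply: restr0.
have [P [dP hP]] := @DP_restr R n1 n2 n3 K S.
have [W1 [oW1 neW1 sW1 [b hb]]] := dP U oU (ex_intro _ Y0 UY0).
case: b hb => hb.
  exists W1, K; split => // Y WY; split; first by apply/hP; rewrite hb.
  move=> r' hr; rewrite leqNgt; apply/negP => lt.
  by apply: (hK Y (sW1 Y WY)); apply: restr_le lt hr.
have hK' : forall Y, W1 Y -> ~ restricts_to_unit (tadd Y S) K.
  by move=> Y WY /hP; rewrite hb.
have [W [q [oW neW sW hW]]] := IH W1 oW1 neW1 hK'.
by exists W, q; split => // Y /sW /sW1.
Qed.

Lemma finite_pos (R : realType) (I : finType) (f : I -> R) :
  (forall i, 0 < f i) -> exists2 d, 0 < d & forall i, d <= f i.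
Proof.
move=> fp.
suff [d dp hd] : exists2 d, 0 < d & forall i, i \in enum I -> d <= f i.
  by exists d => // i; apply: hd; rewrite mem_enum.
elim: (enum I) => [|x s [d dp hd]]; first by exists 1.
exists (Num.min (f x) d); first by rewrite lt_min fp dp.
move=> i; rewrite in_cons => /orP[/eqP ->|/hd]; first exact: minle_l.
by apply: le_trans (minle_r _ _).
Qed.

Lemma cube_open (R : realType) n1 n2 n3 (T0 : tensor R n1 n2 n3) eta :
  isopen (fun T => near T T0 eta).
Proof.
move=> T hT.
have [d dp hd] := @finite_pos R _ (fun x : 'I_n1 * 'I_n2 * 'I_n3 =>
    eta - `|T x.1.1 x.1.2 x.2 - T0 x.1.1 x.1.2 x.2|)
  (fun x => ltac:(by rewrite subr_gt0; apply: hT)).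
exists d => // T' h i j k.
have h1 := hd (i, j, k); have h2 := h i j k; simpl in h1.
have : `|T' i j k - T0 i j k| <= `|T' i j k - T i j k| + `|T i j k - T0 i j k|.
  by have := ler_normD (T' i j k - T i j k) (T i j k - T0 i j k); rewrite addrA subrK.
lra.
Qed.

Lemma term_le_sum (R : realType) (I : finType) (F : I -> R) i0 :
  (forall i, 0 <= F i) -> F i0 <= \sum_i F i.
Proof. by move=> h; rewrite (bigD1 i0) //= lerDl sumr_ge0. Qed.

Lemma dist_coord (R : realType) n1 n2 n3 (T T0 : tensor R n1 n2 n3) i j k :
  (T i j k - T0 i j k) ^+ 2 <= tensor_dist2 T T0.
Proof.
rewrite /tensor_dist2.
have h3 : (T i j k - T0 i j k) ^+ 2 <= \sum_(k' < n3) (T i j k' - T0 i j k') ^+ 2.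
  by apply: (@term_le_sum _ _ (fun k' => (T i j k' - T0 i j k') ^+ 2) k) => k'; apply: sqr_ge0.
have h2 : \sum_(k' < n3) (T i j k' - T0 i j k') ^+ 2 <=
   \sum_(j' < n2) \sum_(k' < n3) (T i j' k' - T0 i j' k') ^+ 2.
  apply: (@term_le_sum _ _ (fun j' => \sum_(k' < n3) (T i j' k' - T0 i j' k') ^+ 2) j) => j'.
  by apply: sumr_ge0 => k' _; apply: sqr_ge0.
have h1 : \sum_(j' < n2) \sum_(k' < n3) (T i j' k' - T0 i j' k') ^+ 2 <=
   \sum_(i' < n1) \sum_(j' < n2) \sum_(k' < n3) (T i' j' k' - T0 i' j' k') ^+ 2.
  apply: (@term_le_sum _ _ (fun i' => \sum_(j' < n2) \sum_(k' < n3) (T i' j' k' - T0 i' j' k') ^+ 2) i) => i'.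
  by apply: sumr_ge0 => j' _; apply: sumr_ge0 => k' _; apply: sqr_ge0.
exact: le_trans h3 (le_trans h2 h1).
Qed.

Lemma cube_ball (R : realType) n1 n2 n3 (T0 : tensor R n1 n2 n3) eps : 0 < eps ->
  exists2 eta, 0 < eta & forall T, near T T0 eta -> tensor_dist2 T T0 < eps ^+ 2.
Proof.
move=> ep.
pose M := (n3 * (n2 * n1))%N.
have Mp : 0 < (M.+1)%:R :> R by rewrite ltr0n.
exists (eps / (M.+1)%:R); first by rewrite divr_gt0.
move=> T h.
set eta := eps / (M.+1)%:R.
have etap : 0 < eta by rewrite divr_gt0.
have he : eta * (M.+1)%:R = eps by rewrite /eta divfK // gt_eqF.
have le : tensor_dist2 T T0 <= \sum_(i < n1) \sum_(j < n2) \sum_(k < n3) eta ^+ 2.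
  apply: ler_sum => i _; apply: ler_sum => j _; apply: ler_sum => k _.
  have := h i j k; rewrite ltr_norml => /andP[a b].
  have a' : 0 < eta + (T i j k - T0 i j k) by rewrite addrC -[eta]opprK subr_gt0.
  have b' : 0 < eta - (T i j k - T0 i j k) by rewrite subr_gt0.
  have := mulr_gt0 a' b'.
  have -> : (eta + (T i j k - T0 i j k)) * (eta - (T i j k - T0 i j k)) =
    eta ^+ 2 - (T i j k - T0 i j k) ^+ 2 by ring.
  rewrite subr_gt0 => /ltW //.
apply: le_lt_trans le _.
rewrite !sumr_const !card_ord -!mulrnA -mulr_natr -/M.
rewrite -natr1 in he.
have M0 : 0 <= M%:R :> R by rewrite ler0n.
clearbody eta M.
move: (M%:R : R) M0 he => m M0 he.
rewrite -he; nra.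
Qed.

Lemma fin_typ (R : realType) n1 n2 n3 (S : tensor R n1 n2 n3) W q :
  isopen W -> (exists Y, W Y) -> (forall Y, W Y -> subrank_is (tadd Y S) q) ->
  typical_subrank R n1 n2 n3 q.
Proof.
move=> oW [Y0 WY0] hW.
have [d dp hd] := oW Y0 WY0.
exists (tadd Y0 S), d; split => // T hT.
apply: (@subrank_ext _ _ _ _ (tadd (fun i j k => T i j k - S i j k) S)).
  by move=> i j k; rewrite /tadd subrK.
apply: hW; apply: hd => i j k.
have := le_lt_trans (dist_coord T (tadd Y0 S) i j k) hT.
rewrite /tadd ltr_norml => h.
apply/andP; split; nra.
Qed.

Definition Sj (R : realType) n1 n2 n3 (D : tensor R n1 n2 n3) (j : nat) : tensor R n1 n2 n3 :=
  fun i1 i2 i3 => if (enum_rank (i1, i2, i3) < j)%N then D i1 i2 i3 else 0.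

Lemma Sj_step (R : realType) n1 n2 n3 (D : tensor R n1 n2 n3) j X m :
  (j < #|{: 'I_n1 * 'I_n2 * 'I_n3}|)%N ->
  (restricts_to_unit (tadd X (Sj D j.+1)) m.+1 -> restricts_to_unit (tadd X (Sj D j)) m) /\
  (restricts_to_unit (tadd X (Sj D j)) m.+1 -> restricts_to_unit (tadd X (Sj D j.+1)) m).
Proof.
move=> hj.
pose x0 := enum_val (Ordinal hj).
have key : forall i1 i2 i3, (i1 != x0.1.1) || (i2 != x0.1.2) || (i3 != x0.2) ->
    tadd X (Sj D j) i1 i2 i3 = tadd X (Sj D j.+1) i1 i2 i3.
  move=> i1 i2 i3 hne; rewrite /tadd /Sj ltnS (leq_eqVlt (enum_rank (i1, i2, i3))).
  case: eqP => [e|_ //]; exfalso; move: hne; apply/negP.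
  have e' : enum_rank (i1, i2, i3) = Ordinal hj by apply: val_inj.
  have : (i1, i2, i3) = x0 by rewrite /x0 -e' enum_rankK.
  by case: x0 => [[a b] c] [-> -> ->] /=; rewrite !eqxx.
split; first exact: restr_change key.
move=> h; apply: (restr_change (T' := tadd X (Sj D j)) (i0 := x0.1.1) (j0 := x0.1.2) (k0 := x0.2) _ h).
by move=> i1 i2 i3 hne; rewrite key.
Qed.


Unset Implicit Arguments.

Theorem theorem1p7 (R : realType) (n1 n2 n3 r s l : nat) :
  typical_subrank R n1 n2 n3 r -> typical_subrank R n1 n2 n3 s -> (r <= s)%N ->
  (r <= l)%N -> (l <= s)%N -> typical_subrank R n1 n2 n3 l.
Proof.
move=> [Tr [er [erp hr]]] [Ts [es [esp hs]]] _ rl ls.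
have [etr etrp hetr] := cube_ball Tr erp.
have [ets etsp hets] := cube_ball Ts esp.
pose eta := Num.min etr ets.
have etap : 0 < eta by rewrite lt_min etrp etsp.
pose D : tensor R n1 n2 n3 := fun i j k => Ts i j k - Tr i j k.
pose N := #|{: 'I_n1 * 'I_n2 * 'I_n3}|.
pose U0 := fun X => near X Tr eta.
have oU0 : isopen U0 by apply: cube_open.
have neU0 : exists Y, U0 Y by exists Tr; move=> i j k; rewrite subrr normr0.
have F1 : forall X, U0 X -> subrank_is (tadd X (Sj D 0)) r.
  move=> X hX; apply: (@subrank_ext _ _ _ _ X).
    by move=> i j k; rewrite /tadd /Sj ltn0 addr0.
  by apply: hr; apply: hetr; apply: near_le hX (minle_l _ _).
have F2 : forall X, U0 X -> subrank_is (tadd X (Sj D N)) s.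
  move=> X hX; apply: hs; apply: hets => i j k.
  have lt : (enum_rank (i, j, k) < N)%N by exact: ltn_ord.
  rewrite /tadd /Sj lt /D.
  have -> : X i j k + (Ts i j k - Tr i j k) - Ts i j k = X i j k - Tr i j k by ring.
  exact: lt_le_trans (hX i j k) (minle_r _ _).
have F4 : forall X, U0 X -> forall d j, (j + d)%N = N ->
    ~ restricts_to_unit (tadd X (Sj D j)) (s + d).+1.
  move=> X hX; elim=> [|d IH] j hjd.
    rewrite addn0 in hjd; subst j => h.
    have [_ m] := F2 X hX; have := m _ h; rewrite addn0 ltnn //.
  move=> h; have hj : (j < N)%N by lia.
  have [_ b] := Sj_step D X (s + d).+1 hj.
  apply: (IH j.+1); first by lia.
  by apply: b; rewrite -addnS.
have C : forall j, (j <= N)%N -> typical_subrank R n1 n2 n3 l \/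
   exists W q, [/\ isopen W, (exists Y, W Y), (forall Y, W Y -> U0 Y), (q < l)%N &
      forall Y, W Y -> subrank_is (tadd Y (Sj D j)) q].
  elim=> [_|j IH hj].
    case: (eqVneq r l) => [<-|ne]; first by left; exists Tr, er.
    right; exists U0, r; split => //; by rewrite ltn_neqAle ne.
  case: (IH (ltnW hj)) => [|[W [q [oW neW sW ql hW]]]]; first by left.
  have hK : forall Y, W Y -> ~ restricts_to_unit (tadd Y (Sj D j.+1)) (s + (N - j.+1)).+1.
    by move=> Y WY; apply: F4 (sW _ WY) _ _ _; lia.
  have [W' [q' [oW' neW' sW' hW']]] := Klem oW neW hK.
  have q'le : (q' <= q.+1)%N.
    case: neW' => Y WY; have [h1 _] := hW' Y WY; have [_ m2] := hW Y (sW' Y WY).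
    move: h1; case: q' {hW'} => [//|m] h1.
    have [a _] := Sj_step D Y m hj.
    by have := m2 _ (a h1).
  case: (eqVneq q' l) => [e|ne].
    by left; subst q'; exact: fin_typ oW' neW' hW'.
  right; exists W', q'; split => //; first by move=> Y /sW' /sW.
  by rewrite ltn_neqAle ne /=; lia.
have [//|[W [q [oW [Y WY] sW ql hW]]]] := C N (leqnn N).
have := subrank_uniq (hW Y WY) (F2 Y (sW Y WY)); lia.
Qed.
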